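(* Any surface $S$ of the class $\Gamma$ has the following properties: $1)$ the parametric lines are principal lines; $2)$ the family $\mathcal F_1$ of $u$-lines ($v=\mathrm{const}$) consists of geodesics.
   Context: Let $c_2: x=x(v),\ v\in J_2$, be a smooth regular curve in Euclidean space $\mathbb R^3$ parameterized by arc length, with unit tangent $t(v)$, principal normal $n(v)$, binormal $b(v)$, curvature $\kappa(v)>0$ and torsion $\tau(v)$. Put $\theta(v)=-\int_0^v\tau\,dv$ and $e_1=\cos\theta\, n+\sin\theta\, b$, $e_2=-\sin\theta\, n+\cos\theta\, b$ (an orthonormal pair of torse-forming normals along $c_2$, i.e. $e_i'$ is proportional to $t$). Let $\lambda(u),\mu(u)$, $u\in J_1$, be functions with $\dot\lambda^2+\dot\mu^2=1$, $\lambda(0)=\mu(0)=0$, $\dot\lambda(0)=1$, $\dot\mu(0)=0$, so that $u\mapsto(\lambda(u),\mu(u))$ is a plane curve $c_1$ parameterized by arc length with plane curvature $\kappa_1(u)\neq 0$. Consider the surface $S: Z(u,v)=x(v)+\lambda(u)e_1(v)+\mu(u)e_2(v)$, $u\in J_1$, $v\in J_2$, at the points where $\lambda\cos\theta-\mu\sin\theta\neq 1/\kappa$, oriented by the unit normal $l=-\dot\mu\, e_1+\dot\lambda\, e_2$. The class $\Gamma$ is the class of all such surfaces. A family of parametric lines is called principal if its lines are lines of curvature; $\mathcal F_1$ denotes the family of $u$-parameter lines and $\mathcal F_2$ the family of $v$-parameter lines. *)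

(* Defs.v *)
From Stdlib Require Import Reals.
From Coquelicot Require Import Coquelicot.
Open Scope R_scope.

Definition vec := (R * R * R)%type.
Definition vx (a : vec) : R := fst (fst a).
Definition vy (a : vec) : R := snd (fst a).
Definition vz (a : vec) : R := snd a.
Definition vmk (a b c : R) : vec := (a, b, c).
Definition vadd (a b : vec) : vec := vmk (vx a + vx b) (vy a + vy b) (vz a + vz b).
Definition vscal (k : R) (a : vec) : vec := vmk (k * vx a) (k * vy a) (k * vz a).
Definition dot (a b : vec) : R := vx a * vx b + vy a * vy b + vz a * vz b.
Definition cross (a b : vec) : vec :=
  vmk (vy a * vz b - vz a * vy b) (vz a * vx b - vx a * vz b) (vx a * vy b - vy a * vx b).

Definition vderive (f : R -> vec) (s : R) : vec :=
  vmk (Derive (fun r => vx (f r)) s) (Derive (fun r => vy (f r)) s)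
      (Derive (fun r => vz (f r)) s).
Definition has_vderive (f : R -> vec) (s : R) (d : vec) : Prop :=
  is_derive (fun r => vx (f r)) s (vx d) /\
  is_derive (fun r => vy (f r)) s (vy d) /\
  is_derive (fun r => vz (f r)) s (vz d).

Definition in_open (a b : Rbar) (s : R) : Prop := Rbar_lt a s /\ Rbar_lt s b.

Definition theta (tau : R -> R) (v : R) : R := - RInt tau 0 v.

Definition e1 (tau : R -> R) (n b : R -> vec) (v : R) : vec :=
  vadd (vscal (cos (theta tau v)) (n v)) (vscal (sin (theta tau v)) (b v)).
Definition e2 (tau : R -> R) (n b : R -> vec) (v : R) : vec :=
  vadd (vscal (- sin (theta tau v)) (n v)) (vscal (cos (theta tau v)) (b v)).

Definition Zsurf (x n b : R -> vec) (tau lam mu : R -> R) (u v : R) : vec :=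
  vadd (x v) (vadd (vscal (lam u) (e1 tau n b v)) (vscal (mu u) (e2 tau n b v))).

Definition lnormal (n b : R -> vec) (tau lam mu : R -> R) (u v : R) : vec :=
  vadd (vscal (- Derive mu u) (e1 tau n b v)) (vscal (Derive lam u) (e2 tau n b v)).

Definition d_u (F : R -> R -> vec) (u v : R) : vec := vderive (fun s => F s v) u.
Definition d_v (F : R -> R -> vec) (u v : R) : vec := vderive (fun s => F u s) v.

(** The u-lines (v = const) are lines of curvature on the part [D] of the surface
    [Z] with unit normal [N]: at each point, Z_u is a principal direction, i.e.
    an eigenvector of the shape operator (Rodrigues: N_u = k Z_u for some k). *)
Definition u_lines_principal (Z N : R -> R -> vec) (D : R -> R -> Prop) : Prop :=
  forall u v, D u v -> exists k : R, d_u N u v = vscal k (d_u Z u v).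
Definition v_lines_principal (Z N : R -> R -> vec) (D : R -> R -> Prop) : Prop :=
  forall u v, D u v -> exists k : R, d_v N u v = vscal k (d_v Z u v).

(** The u-lines, parametrized by u, are geodesics: their acceleration Z_uu
    is normal to the surface at every point of [D]. *)
Definition u_lines_geodesic (Z N : R -> R -> vec) (D : R -> R -> Prop) : Prop :=
  forall u v, D u v -> exists c : R, d_u (d_u Z) u v = vscal c (N u v).

(* Main.v *)
Require Import Defs.
From Stdlib Require Import Reals Lra.
From Coquelicot Require Import Coquelicot.
Open Scope R_scope.

Lemma isd_mult (f g : R -> R) x df dg : is_derive f x df -> is_derive g x dg ->
  is_derive (fun r => f r * g r) x (df * g x + f x * dg).
Proof. intros Hf Hg. exact (is_derive_mult f g x df dg Hf Hg Rmult_comm). Qed.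

Lemma isd_plus (f g : R -> R) x df dg : is_derive f x df -> is_derive g x dg ->
  is_derive (fun r => f r + g r) x (df + dg).
Proof. intros Hf Hg. exact (is_derive_plus f g x df dg Hf Hg). Qed.

Lemma isd_const (c x : R) : is_derive (fun _ => c) x 0.
Proof. exact (is_derive_const c x). Qed.

Lemma isd_opp (f : R -> R) x df : is_derive f x df -> is_derive (fun r => - f r) x (- df).
Proof. intro H. exact (is_derive_opp f x df H). Qed.

Lemma isd_comp (f g : R -> R) x df dg : is_derive f (g x) df -> is_derive g x dg ->
  is_derive (fun r => f (g r)) x (dg * df).
Proof. intros H1 H2. exact (is_derive_comp f g x df dg H1 H2). Qed.

Lemma hv_add f g s df dg : has_vderive f s df -> has_vderive g s dg ->
  has_vderive (fun r => vadd (f r) (g r)) s (vadd df dg).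
Proof. intros [A [B C]] [A' [B' C']]; split; [|split]; apply isd_plus; auto. Qed.

Lemma hv_scal (g : R -> R) f s g' f' : is_derive g s g' -> has_vderive f s f' ->
  has_vderive (fun r => vscal (g r) (f r)) s (vadd (vscal g' (f s)) (vscal (g s) f')).
Proof. intros Hg [A [B C]]; split; [|split]; apply isd_mult; auto. Qed.

Lemma hv_const (c : vec) s : has_vderive (fun _ => c) s (vmk 0 0 0).
Proof. split; [|split]; apply isd_const. Qed.

Lemma hv_unique f s d : has_vderive f s d -> vderive f s = d.
Proof. intros [A [B C]]. unfold vderive.
  assert (E1 : Derive (fun r => vx (f r)) s = vx d) by exact (is_derive_unique _ _ _ A).
  assert (E2 : Derive (fun r => vy (f r)) s = vy d) by exact (is_derive_unique _ _ _ B).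
  assert (E3 : Derive (fun r => vz (f r)) s = vz d) by exact (is_derive_unique _ _ _ C).
  rewrite E1, E2, E3. destruct d as [[? ?] ?]; reflexivity. Qed.

Lemma hv_ext_loc f g s d : locally s (fun r => f r = g r) -> has_vderive f s d -> has_vderive g s d.
Proof. intros L [A [B C]].
  assert (K : forall h : vec -> R, locally s (fun r => h (f r) = h (g r))).
  { intro h. eapply filter_imp; [|exact L]. intros r E; simpl; rewrite E; reflexivity. }
  split; [|split].
  - exact (is_derive_ext_loc _ _ _ _ (K vx) A).
  - exact (is_derive_ext_loc _ _ _ _ (K vy) B).
  - exact (is_derive_ext_loc _ _ _ _ (K vz) C). Qed.

Lemma loc_open a b p : in_open a b p -> locally p (in_open a b).
Proof. intros H. apply (open_and _ _ (open_Rbar_gt a) (open_Rbar_lt b)). exact H. Qed.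

Lemma in_open_conv a b p q z : in_open a b p -> in_open a b q -> p <= z <= q -> in_open a b z.
Proof. intros [H1 H2] [H3 H4] [H5 H6]. split.
 - destruct a; simpl in *; auto; lra.
 - destruct b; simpl in *; auto; lra. Qed.

Lemma theta_deriv a b (tau : R -> R) (H0 : in_open a b 0)
  (Htau : forall v, in_open a b v -> continuous tau v) v (Hv : in_open a b v) :
  is_derive (theta tau) v (- tau v).
Proof.
  unfold theta. apply isd_opp.
  apply (is_derive_RInt tau (fun y => RInt tau 0 y) 0 v); [|apply Htau; exact Hv].
  eapply filter_imp; [|apply (loc_open _ _ _ Hv)].
  intros y Hy. apply (RInt_correct (V:=R_CompleteNormedModule)). apply (ex_RInt_continuous (V:=R_CompleteNormedModule)).
  intros z Hz. apply Htau.
  destruct (Rle_dec 0 y) as [Hle|Hle].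
  - rewrite Rmin_left, Rmax_right in Hz by lra. exact (in_open_conv _ _ _ _ _ H0 Hy Hz).
  - rewrite Rmin_right, Rmax_left in Hz by lra. exact (in_open_conv _ _ _ _ _ Hy H0 Hz).
Qed.

Lemma cos_th th v th' : is_derive th v th' -> is_derive (fun r => cos (th r)) v (th' * - sin (th v)).
Proof. intro H. apply (isd_comp cos th v); [apply is_derive_cos | exact H]. Qed.
Lemma sin_th th v th' : is_derive th v th' -> is_derive (fun r => sin (th r)) v (th' * cos (th v)).
Proof. intro H. apply (isd_comp sin th v); [apply is_derive_sin | exact H]. Qed.

Ltac vring := unfold vadd, vscal, vmk, vx, vy, vz; simpl; f_equal; [f_equal|]; ring.

Lemma e_derivs a b (tau kappa : R -> R) (t n b0 : R -> vec) (H0 : in_open a b 0)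
  (Htau : forall v, in_open a b v -> continuous tau v)
  (Hn : forall v, in_open a b v ->
          has_vderive n v (vadd (vscal (- kappa v) (t v)) (vscal (tau v) (b0 v))))
  (Hb : forall v, in_open a b v -> has_vderive b0 v (vscal (- tau v) (n v)))
  v (Hv : in_open a b v) :
  has_vderive (e1 tau n b0) v (vscal (- kappa v * cos (theta tau v)) (t v)) /\
  has_vderive (e2 tau n b0) v (vscal (kappa v * sin (theta tau v)) (t v)).
Proof.
  pose proof (theta_deriv a b tau H0 Htau v Hv) as Ht.
  split.
  - pose proof (hv_add _ _ _ _ _ (hv_scal _ _ _ _ _ (cos_th _ _ _ Ht) (Hn v Hv))
                              (hv_scal _ _ _ _ _ (sin_th _ _ _ Ht) (Hb v Hv))) as K.
    replace (vscal (- kappa v * cos (theta tau v)) (t v)) with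
      (vadd (vadd (vscal (- tau v * - sin (theta tau v)) (n v))
          (vscal (cos (theta tau v)) (vadd (vscal (- kappa v) (t v)) (vscal (tau v) (b0 v)))))
       (vadd (vscal (- tau v * cos (theta tau v)) (b0 v)) (vscal (sin (theta tau v)) (vscal (- tau v) (n v))))) by vring.
    exact K.
  - pose proof (hv_add _ _ _ _ _ (hv_scal _ _ _ _ _ (isd_opp _ _ _ (sin_th _ _ _ Ht)) (Hn v Hv))
                              (hv_scal _ _ _ _ _ (cos_th _ _ _ Ht) (Hb v Hv))) as K.
    replace (vscal (kappa v * sin (theta tau v)) (t v)) with
      (vadd (vadd (vscal (- (- tau v * cos (theta tau v))) (n v))
          (vscal (- sin (theta tau v)) (vadd (vscal (- kappa v) (t v)) (vscal (tau v) (b0 v)))))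
       (vadd (vscal (- tau v * - sin (theta tau v)) (b0 v)) (vscal (cos (theta tau v)) (vscal (- tau v) (n v))))) by vring.
    exact K.
Qed.

Lemma hv_eq f s d d' : has_vderive f s d -> d = d' -> has_vderive f s d'.
Proof. intros H E; subst; exact H. Qed.

Lemma vscal_assoc a b w : vscal a (vscal b w) = vscal (a*b) w.
Proof. destruct w as [[? ?] ?]; vring. Qed.

Theorem lemma2p1
  (a1 b1 a2 b2 : Rbar)
  (x t n b : R -> vec) (kappa tau lam mu : R -> R)
  (HJ1 : in_open a1 b1 0) (HJ2 : in_open a2 b2 0)
  (Hx : forall v, in_open a2 b2 v -> has_vderive x v (t v))
  (Ht : forall v, in_open a2 b2 v -> has_vderive t v (vscal (kappa v) (n v)))
  (Hn : forall v, in_open a2 b2 v ->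
          has_vderive n v (vadd (vscal (- kappa v) (t v)) (vscal (tau v) (b v))))
  (Hb : forall v, in_open a2 b2 v -> has_vderive b v (vscal (- tau v) (n v)))
  (Hortho : forall v, in_open a2 b2 v ->
     dot (t v) (t v) = 1 /\ dot (n v) (n v) = 1 /\ dot (b v) (b v) = 1 /\
     dot (t v) (n v) = 0 /\ dot (t v) (b v) = 0 /\ dot (n v) (b v) = 0)
  (Hbtn : forall v, in_open a2 b2 v -> b v = cross (t v) (n v))
  (Hkappa : forall v, in_open a2 b2 v -> 0 < kappa v)
  (Htau : forall v, in_open a2 b2 v -> continuous tau v)
  (Hlam : forall u, in_open a1 b1 u -> ex_derive lam u /\ ex_derive (Derive lam) u)
  (Hmu : forall u, in_open a1 b1 u -> ex_derive mu u /\ ex_derive (Derive mu) u)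
  (Hunit : forall u, in_open a1 b1 u -> (Derive lam u) ^ 2 + (Derive mu u) ^ 2 = 1)
  (Hinit : lam 0 = 0 /\ mu 0 = 0 /\ Derive lam 0 = 1 /\ Derive mu 0 = 0)
  (Hk1 : forall u, in_open a1 b1 u ->
     Derive lam u * Derive (Derive mu) u - Derive (Derive lam) u * Derive mu u <> 0) :
  let Z := Zsurf x n b tau lam mu in
  let l := lnormal n b tau lam mu in
  let D := fun u v => in_open a1 b1 u /\ in_open a2 b2 v /\
           lam u * cos (theta tau v) - mu u * sin (theta tau v) <> / kappa v in
  (u_lines_principal Z l D /\ v_lines_principal Z l D) /\ u_lines_geodesic Z l D.
Proof.
  intros Z l D.
  set (E1 := e1 tau n b). set (E2 := e2 tau n b).
  assert (dZu : forall u v, in_open a1 b1 u ->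
    d_u Z u v = vadd (vscal (Derive lam u) (E1 v)) (vscal (Derive mu u) (E2 v))).
  { intros u v Hu. unfold d_u. apply hv_unique. eapply hv_eq.
    - apply (hv_add (fun _ => x v) (fun s => vadd (vscal (lam s) (E1 v)) (vscal (mu s) (E2 v)))).
      + apply hv_const.
      + apply hv_add; (apply hv_scal; [apply Derive_correct|apply hv_const]).
        * apply (Hlam u Hu).
        * apply (Hmu u Hu).
    - destruct (E1 v) as [[? ?] ?]; destruct (E2 v) as [[? ?] ?]; vring. }
  assert (dlu : forall u v, in_open a1 b1 u ->
    d_u l u v = vadd (vscal (- Derive (Derive mu) u) (E1 v)) (vscal (Derive (Derive lam) u) (E2 v))).
  { intros u v Hu. unfold d_u. apply hv_unique. eapply hv_eq.
    - apply (hv_add (fun s => vscal (- Derive mu s) (E1 v)) (fun s => vscal (Derive lam s) (E2 v))).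
      + apply hv_scal; [apply isd_opp; apply Derive_correct|apply hv_const]. apply (Hmu u Hu).
      + apply hv_scal; [apply Derive_correct|apply hv_const]. apply (Hlam u Hu).
    - destruct (E1 v) as [[? ?] ?]; destruct (E2 v) as [[? ?] ?]; vring. }
  assert (dZuu : forall u v, in_open a1 b1 u ->
    d_u (d_u Z) u v = vadd (vscal (Derive (Derive lam) u) (E1 v)) (vscal (Derive (Derive mu) u) (E2 v))).
  { intros u v Hu. unfold d_u at 1. apply hv_unique.
    apply (hv_ext_loc (fun s => vadd (vscal (Derive lam s) (E1 v)) (vscal (Derive mu s) (E2 v)))).
    - eapply filter_imp; [|apply (loc_open _ _ _ Hu)]. intros r Hr. rewrite dZu by exact Hr. reflexivity.
    - eapply hv_eq.
      + apply hv_add; (apply hv_scal; [apply Derive_correct|apply hv_const]).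
        * apply (Hlam u Hu).
        * apply (Hmu u Hu).
      + destruct (E1 v) as [[? ?] ?]; destruct (E2 v) as [[? ?] ?]; vring. }
  assert (orth : forall u, in_open a1 b1 u ->
    Derive lam u * Derive (Derive lam) u + Derive mu u * Derive (Derive mu) u = 0).
  { intros u Hu.
    assert (K1 : is_derive (fun r => Derive lam r * Derive lam r + Derive mu r * Derive mu r) u
      (Derive (Derive lam) u * Derive lam u + Derive lam u * Derive (Derive lam) u +
       (Derive (Derive mu) u * Derive mu u + Derive mu u * Derive (Derive mu) u))).
    { apply isd_plus; apply isd_mult; apply Derive_correct; first [apply (Hlam u Hu)|apply (Hmu u Hu)]. }
    assert (K2 : is_derive (fun r => Derive lam r * Derive lam r + Derive mu r * Derive mu r) u 0).
    { apply (is_derive_ext_loc (fun _ => 1)); [|apply isd_const].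
      eapply filter_imp; [|apply (loc_open _ _ _ Hu)]. intros r Hr.
      rewrite <- (Hunit r Hr). simpl. ring. }
    pose proof (is_derive_unique _ _ _ K1) as U1. pose proof (is_derive_unique _ _ _ K2) as U2.
    rewrite U1 in U2. lra. }
  assert (dZv : forall u v, in_open a2 b2 v ->
    d_v Z u v = vscal (1 - kappa v * (lam u * cos (theta tau v) - mu u * sin (theta tau v))) (t v)).
  { intros u v Hv. destruct (e_derivs a2 b2 tau kappa t n b HJ2 Htau Hn Hb v Hv) as [De1 De2].
    unfold d_v. apply hv_unique. eapply hv_eq.
    - apply (hv_add x (fun s => vadd (vscal (lam u) (E1 s)) (vscal (mu u) (E2 s)))).
      + apply (Hx v Hv).
      + apply hv_add; (apply hv_scal; [apply isd_const|]); [exact De1|exact De2].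
    - destruct (t v) as [[? ?] ?]; destruct (E1 v) as [[? ?] ?]; destruct (E2 v) as [[? ?] ?]; vring. }
  assert (dlv : forall u v, in_open a2 b2 v ->
    d_v l u v = vscal (kappa v * (Derive mu u * cos (theta tau v) + Derive lam u * sin (theta tau v))) (t v)).
  { intros u v Hv. destruct (e_derivs a2 b2 tau kappa t n b HJ2 Htau Hn Hb v Hv) as [De1 De2].
    unfold d_v. apply hv_unique. eapply hv_eq.
    - apply (hv_add (fun s => vscal (- Derive mu u) (E1 s)) (fun s => vscal (Derive lam u) (E2 s))).
      + apply hv_scal; [apply isd_const|]; exact De1.
      + apply hv_scal; [apply isd_const|]; exact De2.
    - destruct (t v) as [[? ?] ?]; destruct (E1 v) as [[? ?] ?]; destruct (E2 v) as [[? ?] ?]; vring. }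
  assert (S12 : forall u, in_open a1 b1 u ->
    Derive (Derive lam) u = - (Derive lam u * Derive (Derive mu) u - Derive (Derive lam) u * Derive mu u) * Derive mu u /\
    - Derive (Derive mu) u = - (Derive lam u * Derive (Derive mu) u - Derive (Derive lam) u * Derive mu u) * Derive lam u).
  { intros u Hu. pose proof (orth u Hu) as O. pose proof (Hunit u Hu) as U.
    set (p := Derive lam u) in *. set (q := Derive mu u) in *.
    set (p2 := Derive (Derive lam) u) in *. set (q2 := Derive (Derive mu) u) in *.
    split.
    - assert (E : p2 - - (p * q2 - p2 * q) * q = p2 * (1 - (p^2+q^2)) + p * (p*p2+q*q2)) by ring.
      rewrite U, O in E. lra.
    - assert (E : - q2 - - (p * q2 - p2 * q) * p = - q2 * (1 - (p^2+q^2)) - q * (p*p2+q*q2)) by ring.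
      rewrite U, O in E. lra. }
  split; [split|].
  - intros u v [Hu [Hv _]].
    exists (- (Derive lam u * Derive (Derive mu) u - Derive (Derive lam) u * Derive mu u)).
    rewrite dlu, dZu by exact Hu. destruct (S12 u Hu) as [A B].
    set (c := Derive lam u * Derive (Derive mu) u - Derive (Derive lam) u * Derive mu u) in *.
    rewrite B, A.
    destruct (E1 v) as [[? ?] ?]; destruct (E2 v) as [[? ?] ?]; vring.
  - intros u v [Hu [Hv Hne]].
    pose proof (Hkappa v Hv) as Kp.
    set (w := lam u * cos (theta tau v) - mu u * sin (theta tau v)) in *.
    assert (NZ : 1 - kappa v * w <> 0).
    { intro E. apply Hne. apply (Rmult_eq_reg_l (kappa v)); [|lra].
      rewrite Rinv_r by lra. lra. }
    exists (kappa v * (Derive mu u * cos (theta tau v) + Derive lam u * sin (theta tau v)) / (1 - kappa v * w)).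
    rewrite dlv, dZv by exact Hv. fold w. rewrite vscal_assoc. f_equal. field. exact NZ.
  - intros u v [Hu [Hv _]].
    exists (Derive lam u * Derive (Derive mu) u - Derive (Derive lam) u * Derive mu u).
    rewrite dZuu by exact Hu. destruct (S12 u Hu) as [A B].
    set (c := Derive lam u * Derive (Derive mu) u - Derive (Derive lam) u * Derive mu u) in *.
    assert (B' : Derive (Derive mu) u = c * Derive lam u) by lra.
    rewrite B', A.
    unfold l, lnormal. fold E1 E2.
    destruct (E1 v) as [[? ?] ?]; destruct (E2 v) as [[? ?] ?]; vring.
Qed.
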